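(* Let $f$ be the solution of the radial Loewner PDE $$\frac{\partial f}{\partial t}(z,t)=-z f'(z,t)\,\frac{e^{it}+z}{e^{it}-z},\qquad f(z,0)=z,$$ on $\mathbb{D}\times[0,\infty)$, and let $\gamma(t)=f(e^{it},t)=\phi^{-1}(e^{(i-1)t}\phi(1))$ with $\phi(z)=z(z-i)^{i-1}$. Then $\gamma$ leaves the unit circle orthogonally at $1$: $\lim_{t\to0^+}\operatorname{Arg}(1-\gamma(t))=0$.
   Context: $\mathbb{D}$ is the unit disc, $f'=\partial f/\partial z$; $\phi$ is univalent on $\mathbb{D}$ with the power defined via a holomorphic branch of $\log(z-i)$ on $\mathbb{D}$. $\operatorname{Arg}$ denotes the principal argument. *)

(* Defs.v *)
From Stdlib Require Import Reals.
From Coquelicot Require Import Coquelicot.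
Open Scope R_scope.

(* Principal argument Arg z in (-PI, PI] (atan2 convention), Arg 0 := 0. *)
Definition Arg (z : C) : R :=
  let x := fst z in let y := snd z in
  if Rlt_dec 0 x then atan (y / x)
  else if Rlt_dec x 0 then
    (if Rle_dec 0 y then atan (y / x) + PI else atan (y / x) - PI)
  else
    if Rlt_dec 0 y then PI / 2
    else if Rlt_dec y 0 then - (PI / 2) else 0.

Definition Cexp (z : C) : C :=
  (exp (fst z) * cos (snd z), exp (fst z) * sin (snd z)).

Definition Clog (z : C) : C := (ln (Cmod z), Arg z).

Definition Cpow (z w : C) : C := Cexp (w * Clog z).

(* phi z = z (z - i)^(i - 1); on the unit disc z - i has negative imaginary
   part, so the principal branch of log (z - i) is holomorphic there. *)
Definition phi (z : C) : C := z * Cpow (z - Ci) (Ci - 1).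

Definition in_disc (z : C) : Prop := Cmod z < 1.

(* Main.v *)
Require Import Defs.
From Stdlib Require Import Reals.
From Coquelicot Require Import Coquelicot.
Open Scope R_scope.
From Stdlib Require Import Lra Psatz.

Ltac fld := field; repeat split; try (intro; lra).

Lemma comp_der (g f : R -> R) s dg df : is_derive f s df -> is_derive g (f s) dg ->
  is_derive (fun s => g (f s)) s (dg * df).
Proof. intros H1 H2. replace (dg*df) with (scal df dg).
  exact (is_derive_comp g f s dg df H2 H1). unfold scal; simpl; unfold mult; simpl; ring. Qed.

Lemma der_ext (f : R -> R) (s d1 d2 : R) : is_derive f s d1 -> d1 = d2 -> is_derive f s d2.
Proof. intros; subst; auto. Qed.

Lemma mvt01 (f df : R -> R) : (forall s, 0 <= s <= 1 -> is_derive f s (df s)) ->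
  exists c, 0 <= c <= 1 /\ f 1 - f 0 = df c.
Proof.
  intros H.
  destruct (MVT_gen f 0 1 df) as [c [Hc Hf]].
  - intros s Hs. rewrite Rmin_left, Rmax_right in Hs by lra. apply H; lra.
  - intros s Hs. rewrite Rmin_left, Rmax_right in Hs by lra.
    apply continuity_pt_filterlim. apply (ex_derive_continuous (V:=R_NormedModule) f s). exists (df s). apply H; lra.
  - rewrite Rmin_left, Rmax_right in Hc by lra. exists c. split; [lra|]. rewrite Hf. ring.
Qed.
Lemma B1 u : Rabs (sin u) <= Rabs u.
Proof.
  assert (H := bounded_variation sin cos 1 0 u).
  rewrite sin_0, !Rminus_0_r, Rmult_1_l in H. apply H.
  intros t _. split. apply is_derive_Reals, derivable_pt_lim_sin.
  apply Rabs_le. apply COS_bound.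
Qed.

Lemma B2 u : 0 <= 1 - cos u <= u^2/2.
Proof.
  assert (Hc : cos u = 1 - 2 * sin (u/2) * sin (u/2)) by (rewrite <- cos_2a_sin; f_equal; field).
  rewrite Hc.
  assert (H := B1 (u/2)). assert (sin (u/2) ^2 <= (u/2)^2).
  { rewrite <- (pow2_abs (sin _)), <- (pow2_abs (u/2)). apply pow_incr. split; [apply Rabs_pos|exact H]. }
  split; nra.
Qed.

Lemma B3 u : Rabs (sin u - u) <= u^2/2 * Rabs u.
Proof.
  assert (H := bounded_variation (fun t => sin t - t) (fun t => cos t - 1) (u^2/2) 0 u).
  replace (sin u - u) with ((sin u - u) - (sin 0 - 0)) by (rewrite sin_0; ring).
  eapply Rle_trans. apply H. 2: rewrite Rminus_0_r; lra.
  intros t Ht. rewrite !Rminus_0_r in Ht. split.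
  - auto_derive; auto. ring.
  - assert (H2 := B2 t). assert (t^2 <= u^2). { rewrite <- (pow2_abs t), <- (pow2_abs u). apply pow_incr. split; [apply Rabs_pos|exact Ht]. }
    rewrite Rabs_left1 by lra. lra.
Qed.

Lemma B4 a : a <= 0 -> Rabs (exp a - 1) <= Rabs a.
Proof.
  intros Ha.
  assert (H := bounded_variation exp exp 1 a 0).
  rewrite exp_0, Rmult_1_l in H. rewrite Rabs_minus_sym. replace (Rabs a) with (Rabs (0 - a)).
  apply H. intros t Ht. split. apply is_derive_Reals, derivable_pt_lim_exp.
  rewrite Rabs_pos_eq by (left; apply exp_pos). rewrite <- exp_0.
  rewrite Rminus_0_l, Rabs_Ropp, (Rabs_left1 a Ha) in Ht.
  destruct (Rle_lt_dec t 0). destruct r. left; apply exp_increasing; auto. subst; lra.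
  rewrite Rabs_pos_eq in Ht; lra.
  rewrite Rminus_0_l, Rabs_Ropp; auto.
Qed.

Lemma B5 a : a <= 0 -> Rabs (exp a - 1 - a) <= 2 * a^2.
Proof.
  intros Ha.
  assert (H := bounded_variation (fun t => exp t - t) (fun t => exp t - 1) (2 * Rabs a) a 0).
  simpl in H. rewrite exp_0 in H.
  replace (exp a - 1 - a) with (- ((1 - 0) - (exp a - a))) by ring. rewrite Rabs_Ropp.
  replace (2 * a^2) with (2 * Rabs a * Rabs (0 - a)).
  apply H. intros t Ht. rewrite Rminus_0_l, Rabs_Ropp, (Rabs_left1 a Ha) in Ht. split.
  - auto_derive; auto. ring.
  - assert (t <= 0). { destruct (Rle_lt_dec t 0); auto. rewrite Rabs_pos_eq in Ht; lra. }
    apply Rle_trans with (Rabs t). apply B4; auto.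
    rewrite (Rabs_left1 a Ha). rewrite Rabs_left1 by auto.
    assert (- (t - a) <= - a). { apply Rle_trans with (Rabs (t - a)). rewrite <- Rabs_Ropp. apply Rle_abs. lra. } lra.
  - rewrite Rminus_0_l, Rabs_Ropp, (Rabs_left1 a Ha). ring.
Qed.

Lemma sqrt_bound A B : 0 <= B -> A <= B^2 -> sqrt A <= B.
Proof. intros. rewrite <- (sqrt_pow2 B) by auto. apply sqrt_le_1_alt; auto. Qed.

Lemma Cmod_sum (u v : R) : Cmod (u, v) <= Rabs u + Rabs v.
Proof. unfold Cmod; cbn [fst snd]. apply sqrt_bound. assert (H1 := Rabs_pos u). assert (H2 := Rabs_pos v). lra.
  rewrite <- (pow2_abs u), <- (pow2_abs v). assert (H1 := Rabs_pos u). assert (H2 := Rabs_pos v). nra. Qed.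

Lemma abs_prod_le u v : Rabs u * Rabs v <= (u^2 + v^2)/2.
Proof. rewrite <- (pow2_abs u), <- (pow2_abs v). assert (0 <= (Rabs u - Rabs v)^2) by apply pow2_ge_0. nra. Qed.

Section S.
Variables x y : R.
Definition Pf (s : R) := exp (s*x) * cos (s*y).
Definition Qf (s : R) := exp (s*x) * sin (s*y) - 1.
Definition Nf s := Pf s ^ 2 + Qf s ^ 2.
Definition Lf (s : R) := ln (Nf s) / 2.
Definition Tf (s : R) := - (PI/2) - atan (Pf s / Qf s).
Definition dP s := x * Pf s - y * (Qf s + 1).
Definition dQ s := x * (Qf s + 1) + y * Pf s.

Lemma Pf_der s : is_derive Pf s (dP s).
Proof. unfold dP, Pf, Qf. auto_derive; auto. ring. Qed.
Lemma Qf_der s : is_derive Qf s (dQ s).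
Proof. unfold dQ, Pf, Qf. auto_derive; auto. ring. Qed.
Lemma Nf_der s : is_derive Nf s (2 * (Pf s * dP s + Qf s * dQ s)).
Proof.
  unfold Nf. eapply der_ext.
  apply @is_derive_plus; apply is_derive_pow; [apply Pf_der|apply Qf_der].
  unfold plus; simpl; ring.
Qed.

Lemma Lf_der s : 0 < Nf s ->
  is_derive Lf s ((Pf s * dP s + Qf s * dQ s) / Nf s).
Proof.
  intros H. unfold Lf.
  eapply der_ext. apply (comp_der (fun u => ln u / 2) Nf). apply Nf_der.
  auto_derive. exact H. reflexivity. field. lra.
Qed.

Lemma Tf_der s : Qf s <> 0 ->
  is_derive Tf s (- (dP s * Qf s - Pf s * dQ s) / Nf s).
Proof.
  intros H. unfold Tf.
  assert (HN : 0 < Nf s). { unfold Nf. assert (0 < Qf s ^2) by (apply pow2_gt_0; auto). nra. }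
  eapply der_ext. apply (comp_der (fun u => - (PI/2) - atan u) (fun s => Pf s / Qf s)).
  apply is_derive_div; [apply Pf_der|apply Qf_der|exact H].
  auto_derive. auto. reflexivity. unfold Nf in *. simpl. field. split; [|exact H].
  intro. assert (Qf s^2 > 0) by (apply pow2_gt_0; auto). 
  assert (Qf s ^ 2 + Pf s ^ 2 = Qf s ^2 * (1 + (Pf s / Qf s)^2)) by (field; auto). nra.
Qed.

Lemma E_bounds s : 0 <= s -> x < 0 -> 0 < exp (s*x) <= 1.
Proof. intros. split. apply exp_pos. rewrite <- exp_0. destruct (Rle_lt_or_eq_dec 0 s H). 
  left. apply exp_increasing. nra. subst. rewrite Rmult_0_l. lra. Qed.

Lemma E2_id s : Pf s ^ 2 + (Qf s + 1) ^ 2 = exp (s*x) ^ 2.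
Proof. unfold Pf, Qf. assert (H := sin2_cos2 (s*y)). unfold Rsqr in H.
  replace (exp (s * x) * sin (s * y) - 1 + 1) with (exp (s * x) * sin (s * y)) by ring.
  replace (exp (s*x) ^2) with (exp (s*x)^2 * 1) by ring. rewrite <- H. ring. Qed.

Lemma Nf_id s : Nf s = exp (s*x) ^ 2 - 2 * exp (s*x) * sin (s*y) + 1.
Proof. unfold Nf. assert (H := E2_id s). unfold Qf in *. nra. Qed.

Lemma Qf_neg s : 0 <= s -> x < 0 -> Qf s < 0.
Proof. intros Hs Hx. unfold Qf. destruct (E_bounds s Hs Hx).
  destruct (Rle_lt_or_eq_dec 0 s Hs).
  - assert (exp (s*x) < 1). { rewrite <- exp_0. apply exp_increasing. nra. }
    assert (H3 := SIN_bound (s*y)). nra.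
  - subst. rewrite !Rmult_0_l, sin_0. lra.
Qed.

Lemma Nf_pos s : 0 <= s -> x < 0 -> 0 < Nf s.
Proof. intros. assert (H1 := Qf_neg s H H0). unfold Nf. nra. Qed.

Lemma Nf_le4 s : 0 <= s -> x < 0 -> Nf s <= 4.
Proof. intros. rewrite Nf_id. destruct (E_bounds s H H0). assert (H3 := SIN_bound (s*y)). nra. Qed.

Lemma exp_lb v : 0 <= v -> 1 - exp (- v) >= v / (1 + v).
Proof. intros. rewrite exp_Ropp. assert (H1 := exp_ineq1_le v). assert (0 < exp v) by apply exp_pos.
  apply Rle_ge. apply Rle_trans with (1 - / (1 + v)). right. field. lra.
  apply Rplus_le_compat_l, Ropp_le_contravar. apply Rinv_le_contravar; lra. Qed.

Definition qf s := s * (x^2+y^2) - 2 * x * (Lf s - Lf 0) - 2 * y * (Tf s - Tf 0).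

Lemma step1 : x < 0 ->
  qf 1 >= (x^2+y^2) * (-x) / (4 * (1 + 2 * (-x))).
Proof.
  intros Hx. set (m := x^2+y^2). set (a := -x).
  set (r := fun s => qf s - m * s^2 * a / (4 * (1 + 2*a))).
  set (dr := fun s => m - 2 * x * ((Pf s * dP s + Qf s * dQ s) / Nf s)
     - 2 * y * (- (dP s * Qf s - Pf s * dQ s) / Nf s) - m * s * a / (2 * (1 + 2*a))).
  destruct (mvt01 r dr) as [c [Hc Hr]].
  - intros s Hs. unfold r, dr, qf. fold m.
    assert (HN := Nf_pos s (proj1 Hs) Hx). assert (HQ := Qf_neg s (proj1 Hs) Hx).
    assert (DL := Lf_der s HN). assert (DT := Tf_der s ltac:(lra)).
    auto_derive. repeat split; try (eexists; eassumption).
    assert (E1 : Derive (fun x0 : R => Lf x0) s = (Pf s * dP s + Qf s * dQ s) / Nf s) by (apply is_derive_unique; exact DL).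
    assert (E2 : Derive (fun x0 : R => Tf x0) s = - (dP s * Qf s - Pf s * dQ s) / Nf s) by (apply is_derive_unique; exact DT).
    rewrite E1, E2. field. unfold a; split; lra.
  - assert (r 0 = 0). { unfold r, qf. field. unfold a; lra. }
    assert (r 1 >= 0).
    { assert (dr c >= 0).
      { unfold dr. assert (HN := Nf_pos c (proj1 Hc) Hx). assert (HN4 := Nf_le4 c (proj1 Hc) Hx).
        assert (Hid : m - 2 * x * ((Pf c * dP c + Qf c * dQ c) / Nf c) -
          2 * y * (- (dP c * Qf c - Pf c * dQ c) / Nf c) = m * (1 - (Pf c ^ 2 + (Qf c + 1) ^ 2)) / Nf c).
        { unfold dP, dQ, m, Nf in *. field. lra. }
        rewrite Hid, E2_id. 
        assert (HE : exp (c*x) ^2 = exp (- (2 * c * a))).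
        { replace (-(2*c*a)) with (c*x + c*x) by (unfold a; ring). rewrite exp_plus. ring. }
        rewrite HE.
        assert (Hv := exp_lb (2*c*a) ltac:(unfold a; nra)).
        assert (0 <= m) by (unfold m; nra).
        assert (Ha : 0 < a) by (unfold a; lra).
        assert (H1 : (2*c*a) / (1 + 2*c*a) >= 2*c*a / (1 + 2*a)).
        { apply Rle_ge. unfold Rdiv. apply Rmult_le_compat_l. nra. apply Rinv_le_contravar; nra. }
        assert (H2 : 2*c*a / (1+2*a) * (1 + 2*a) = 2*c*a) by fld.
        set (e := exp (- (2 * c * a))) in *.
        assert (H3 : m * (1 - e) / Nf c >= m * (1 - e) / 4).
        { assert (0 <= 2*c*a / (1 + 2*c*a)). { apply Rdiv_le_0_compat; nra. }
          assert (0 <= m * (1 - e)) by nra.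
          apply Rle_ge. unfold Rdiv. apply Rmult_le_compat_l. lra. apply Rinv_le_contravar; lra. }
        assert (H4 : m * c * a / (2 * (1 + 2 * a)) = m * (2*c*a / (1+2*a)) / 4) by (unfold a in *; fld).
        nra. }
      lra. }
    unfold r in *. simpl in *. lra.
Qed.

Definition LD s := (Pf s * dP s + Qf s * dQ s) / Nf s.
Definition TD s := - (dP s * Qf s - Pf s * dQ s) / Nf s.
Definition ReE s := s*(x-y) - 2*(Lf s - Lf 0) + s^2*(x^2-y^2)/2.
Definition ImE s := s*(x+y) - 2*(Tf s - Tf 0) + s^2*x*y.
Definition dRe s := (x - y) - 2 * LD s + s*(x^2-y^2).
Definition dIm s := (x + y) - 2 * TD s + 2*s*x*y.

Definition zet : C := (x, y).
Definition xi s : C := (s*x, s*y).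
Definition Rr s : C := (Pf s - 1 - s*x, Qf s + 1 - s*y).
Definition wv s : C := (Pf s, Qf s).
Definition Gc s : C := (((Ci - 1) * Rr s + xi s * xi s + xi s * Rr s) * zet / wv s)%C.

Lemma G_id s : Nf s <> 0 -> dRe s = fst (Gc s) /\ dIm s = snd (Gc s).
Proof.
  intros HN. unfold Nf in HN. unfold dRe, dIm, LD, TD, Gc, Rr, xi, zet, wv, dP, dQ, Nf.
  unfold Cdiv, Cmult, Cinv, Cplus, Cminus, Copp, Ci. simpl. split; field; intro H0; apply HN; rewrite <- H0; ring.
Qed.

Lemma G_bound s : 0 <= s <= 1 -> x < 0 -> x^2+y^2 <= 1/16 ->
  Cmod (Gc s) <= 13 * (x^2+y^2) * sqrt (x^2+y^2).
Proof.
  intros Hs Hx Hm. set (m := x^2+y^2) in *. set (sg := sqrt m).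
  assert (Hm0 : 0 <= m) by (unfold m; nra).
  assert (Hsg : sg^2 = m) by (unfold sg; rewrite <- Rsqr_pow2; apply Rsqr_sqrt; auto).
  assert (Hsg0 : 0 <= sg) by apply sqrt_pos.
  assert (Hsg4 : sg <= 1/4) by nra.
  destruct (E_bounds s (proj1 Hs) Hx) as [E0 E1].
  set (a' := s*x) in *. set (b' := s*y) in *.
  assert (Hab : a'^2 + b'^2 <= m).
  { replace (a'^2 + b'^2) with (s^2 * m) by (unfold a', b', m; ring).
    assert (s^2 <= 1) by nra. nra. }
  assert (Ha' : a' <= 0) by (unfold a'; nra).
  assert (Hb1 : Rabs b' <= 1/4). { rewrite <- (pow2_abs b') in Hab. assert (H0 := Rabs_pos b'). nra. }
  assert (HR1 : Rabs (Pf s - 1 - s*x) <= b'^2/2 + 2*a'^2).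
  { unfold Pf. fold a' b'. replace (exp a' * cos b' - 1 - a') with (exp a' * (cos b' - 1) + (exp a' - 1 - a')) by ring.
    eapply Rle_trans. apply Rabs_triang. rewrite Rabs_mult, (Rabs_pos_eq (exp a')) by lra.
    assert (H1 := B2 b'). assert (H2 := B5 a' Ha'). rewrite (Rabs_left1 (cos b' - 1)) by lra. nra. }
  assert (HR2 : Rabs (Qf s + 1 - s*y) <= b'^2/2 + Rabs a' * Rabs b').
  { unfold Qf. fold a' b'. replace (exp a' * sin b' - 1 + 1 - b') with (exp a' * (sin b' - b') + (exp a' - 1) * b') by ring.
    eapply Rle_trans. apply Rabs_triang. rewrite !Rabs_mult, (Rabs_pos_eq (exp a')) by lra.
    assert (H1 := B3 b'). assert (H2 := B4 a' Ha'). assert (H3 := Rabs_pos b').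
    assert (H4 := Rabs_pos (sin b' - b')). assert (H5 := Rabs_pos (exp a' - 1)).
    assert (Rabs (sin b' - b') <= b'^2/2) by nra. nra. }
  assert (HR : Cmod (Rr s) <= 3 * m).
  { unfold Rr. eapply Rle_trans. apply Cmod_sum. assert (H := abs_prod_le a' b'). nra. }
  assert (Hxi : Cmod (xi s) <= sg).
  { unfold xi, Cmod; cbn [fst snd]. unfold sg. apply sqrt_le_1_alt. fold a' b'. lra. }
  assert (Hci : Cmod (Ci - 1) <= 3/2).
  { unfold Cmod. apply sqrt_bound. lra. simpl. lra. }
  assert (Hw : 1/2 <= Cmod (wv s)).
  { unfold wv, Cmod; cbn [fst snd]. fold (Nf s). rewrite Nf_id. fold a' b'.
    assert (Hsb : sin b' <= 1/4). { assert (H := B1 b'). apply Rle_trans with (Rabs (sin b')). apply Rle_abs. lra. }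
    assert (1/4 <= exp a' ^ 2 - 2 * exp a' * sin b' + 1) by nra.
    replace (1/2) with (sqrt ((1/2)^2)) by (apply sqrt_pow2; lra). apply sqrt_le_1_alt. lra. }
  assert (HN : Cmod ((Ci - 1) * Rr s + xi s * xi s + xi s * Rr s) <= 25/4 * m).
  { eapply Rle_trans. apply Cmod_triangle. eapply Rle_trans. apply Rplus_le_compat_r. apply Cmod_triangle.
    rewrite !Cmod_mult. assert (H0 := Cmod_ge_0 (Rr s)). assert (H1 := Cmod_ge_0 (xi s)). assert (H2 := Cmod_ge_0 (Ci - 1)). nra. }
  assert (Hwn : wv s <> 0%C). { intro H. rewrite H, Cmod_0 in Hw. lra. }
  unfold Gc. rewrite Cmod_div by auto. rewrite Cmod_mult.
  assert (Hz : Cmod zet = sg) by reflexivity. rewrite Hz.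
  assert (H0 := Cmod_ge_0 ((Ci - 1) * Rr s + xi s * xi s + xi s * Rr s)).
  apply Rle_trans with (25/4 * m * sg / (1/2)).
  { unfold Rdiv. apply Rmult_le_compat; [apply Rmult_le_pos; auto | left; apply Rinv_0_lt_compat; lra
    | apply Rmult_le_compat_r; auto | apply Rinv_le_contravar; lra]. }
  fold sg. nra.
Qed.

Lemma im_le_Cmod' (c : C) : Rabs (snd c) <= Cmod c.
Proof. destruct c as [u v]. unfold Cmod; cbn [fst snd]. replace (Rabs v) with (sqrt (Rabs v ^ 2)) by (apply sqrt_pow2, Rabs_pos).
  apply sqrt_le_1_alt. rewrite pow2_abs. assert (0 <= u^2) by apply pow2_ge_0. lra. Qed.

Lemma step2 : x < 0 -> x^2+y^2 <= 1/16 ->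
  Rabs (ReE 1) <= 13 * (x^2+y^2) * sqrt (x^2+y^2) /\
  Rabs (ImE 1) <= 13 * (x^2+y^2) * sqrt (x^2+y^2).
Proof.
  intros Hx Hm. split.
  - destruct (mvt01 ReE dRe) as [c [Hc Hr]].
    + intros s Hs. assert (HN := Nf_pos s (proj1 Hs) Hx).
      assert (DL := Lf_der s HN). unfold ReE, dRe.
      auto_derive. repeat split; try (eexists; eassumption).
      assert (E1 : Derive (fun x0 : R => Lf x0) s = LD s) by (apply is_derive_unique; exact DL).
      rewrite E1. field.
    + assert (ReE 0 = 0) by (unfold ReE; field).
      assert (HN := Nf_pos c (proj1 Hc) Hx).
      destruct (G_id c ltac:(lra)) as [G1 _].
      replace (ReE 1) with (dRe c) by lra. rewrite G1.
      eapply Rle_trans. apply re_le_Cmod. apply G_bound; auto.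
  - destruct (mvt01 ImE dIm) as [c [Hc Hr]].
    + intros s Hs. assert (HQ := Qf_neg s (proj1 Hs) Hx).
      assert (DT := Tf_der s ltac:(lra)). unfold ImE, dIm.
      auto_derive. repeat split; try (eexists; eassumption).
      assert (E1 : Derive (fun x0 : R => Tf x0) s = TD s) by (apply is_derive_unique; exact DT).
      rewrite E1. ring.
    + assert (ImE 0 = 0) by (unfold ImE; field).
      assert (HN := Nf_pos c (proj1 Hc) Hx).
      destruct (G_id c ltac:(lra)) as [_ G2].
      replace (ImE 1) with (dIm c) by lra. rewrite G2.
      eapply Rle_trans. apply im_le_Cmod'. apply G_bound; auto.
Qed.
End S.

Lemma B6 u : Rabs (atan u) <= Rabs u.
Proof.
  assert (H := bounded_variation atan (fun t => / (1 + t^2)) 1 0 u).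
  rewrite atan_0, !Rminus_0_r, Rmult_1_l in H. apply H.
  intros t _. split. eapply is_derive_ext. intro; reflexivity.
  assert (Hd := is_derive_atan t). unfold Rsqr in Hd. replace (t^2) with (t*t) by ring. exact Hd.
  assert (0 <= t^2) by apply pow2_ge_0. rewrite Rabs_pos_eq.
  replace 1 with (/1) at 2 by field. apply Rinv_le_contravar; lra.
  left; apply Rinv_0_lt_compat; lra.
Qed.

Lemma arg_bound x y eps : x < 0 -> Rabs y < eps * (-x) ->
  Rabs (Arg (Cminus 1 (exp x * cos y, exp x * sin y))) < eps.
Proof.
  intros Hx Hy.
  assert (He : 0 < exp x < 1). { split. apply exp_pos. rewrite <- exp_0. apply exp_increasing; lra. }
  assert (Hc := COS_bound y).
  assert (Hre : 0 < 1 - exp x * cos y) by nra.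
  assert (Ha : exp x * (- x) <= 1 - exp x).
  { assert (H1 := exp_ineq1_le (-x)). assert (H2 : exp x * exp (-x) = 1) by (rewrite <- exp_plus; replace (x + -x) with 0 by ring; apply exp_0). nra. }
  unfold Arg, Cminus, Cplus, Copp. simpl fst. simpl snd.
  destruct (Rlt_dec 0 (1 + - (exp x * cos y))) as [_|n]; [|exfalso; lra].
  eapply Rle_lt_trans. apply B6.
  rewrite Rabs_div by lra. rewrite (Rabs_pos_eq (1 + - (exp x * cos y))) by lra.
  replace (0 + - (exp x * sin y)) with (- (exp x * sin y)) by ring.
  rewrite Rabs_Ropp, Rabs_mult, (Rabs_pos_eq (exp x)) by lra.
  apply Rmult_lt_reg_r with (1 + - (exp x * cos y)). lra.
  unfold Rdiv. rewrite Rmult_assoc, Rinv_l, Rmult_1_r by lra.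
  assert (Hs := B1 y).
  assert (eps > 0). { assert (H0 := Rabs_pos y). nra. }
  apply Rle_lt_trans with (exp x * Rabs y). apply Rmult_le_compat_l; lra.
  apply Rlt_le_trans with (exp x * (eps * -x)). apply Rmult_lt_compat_l; lra.
  assert (exp x * cos y <= exp x) by nra. assert (eps * (exp x * (-x)) <= eps * (1 - exp x)) by (apply Rmult_le_compat_l; lra). nra.
Qed.

Lemma Arg_neg u v : v < 0 -> Arg (u, v) = - (PI/2) - atan (u / v).
Proof.
  intros Hv. unfold Arg. simpl fst; simpl snd.
  destruct (Rlt_dec 0 u).
  - assert (H := atan_inv (u / - v) ltac:(apply Rdiv_lt_0_compat; lra)).
    replace (/ (u / - v)) with (- (v / u)) in H by (field; lra).
    rewrite atan_opp in H. replace (u / - v) with (- (u / v)) in H by (field; lra).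
    rewrite atan_opp in H. lra.
  - destruct (Rlt_dec u 0).
    + destruct (Rle_dec 0 v); [lra|].
      assert (Hp : 0 < u / v) by (replace (u / v) with ((-u) / (-v)) by (field; lra); apply Rdiv_lt_0_compat; lra).
      assert (H := atan_inv (u / v) Hp).
      replace (/ (u / v)) with (v / u) in H by (field; lra). lra.
    + destruct (Rlt_dec 0 v); [lra|]. destruct (Rlt_dec v 0); [|lra].
      replace u with 0 by lra. unfold Rdiv. rewrite Rmult_0_l, atan_0. ring.
Qed.

Lemma ln_cmod u v : 0 < u^2 + v^2 -> ln (Cmod (u, v)) = ln (u^2 + v^2) / 2.
Proof.
  intros H. unfold Cmod; cbn [fst snd].
  assert (Hs : 0 < sqrt (u^2+v^2)) by (apply sqrt_lt_R0; auto).
  assert (ln (u^2+v^2) = ln (sqrt (u^2+v^2)) + ln (sqrt (u^2+v^2))).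
  { rewrite <- ln_mult by auto. rewrite sqrt_sqrt; auto; lra. }
  lra.
Qed.

Lemma Cexp_add a b : Cexp (a + b)%C = (Cexp a * Cexp b)%C.
Proof.
  destruct a as [a1 a2], b as [b1 b2]. unfold Cexp, Cplus, Cmult. simpl.
  rewrite exp_plus, cos_plus, sin_plus. f_equal; ring.
Qed.

Lemma Cexp_neg a : (Cexp a * Cexp (- a))%C = 1%C.
Proof.
  rewrite <- Cexp_add. replace (a + - a)%C with (RtoC 0).
  unfold Cexp. simpl. rewrite exp_0, cos_0, sin_0. unfold RtoC. f_equal; ring.
  destruct a. unfold Cplus, Copp, RtoC. simpl. f_equal; ring.
Qed.

Lemma reduce (z : C) (t : R) : Cmod z < 1 ->
  phi z = Cmult (Cexp (Cmult (Ci - 1) (RtoC t))) (phi 1) ->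
  exists x y, z = (exp x * cos y, exp x * sin y) /\ x < 0 /\
   qf x y 1 = -2*t*x /\ ReE x y 1 = -2*t + (x^2-y^2)/2 /\ ImE x y 1 = x*y.
Proof.
  intros Hz Hphi.
  set (rho := ln (Cmod (z - Ci))). set (th := Arg (z - Ci)).
  set (c1 := ln (Cmod (1 - Ci))). set (c2 := Arg (1 - Ci)).
  set (X := -t - c1 - c2 + rho + th). set (Y := t + c1 - c2 - rho + th).
  set (P := ((Ci - 1) * (rho, th))%C). set (Q := ((Ci - 1) * (c1, c2))%C).
  set (A := ((Ci - 1) * RtoC t)%C).
  assert (Hphi' : (z * Cexp P)%C = (Cexp A * (1 * Cexp Q))%C) by exact Hphi.
  assert (HzE : z = Cexp (X, Y)).
  { replace z with (z * (Cexp P * Cexp (- P)))%C by (rewrite Cexp_neg; ring).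
    rewrite Cmult_assoc, Hphi'. rewrite Cmult_1_l, <- !Cexp_add. f_equal.
    unfold A, P, Q, X, Y, Ci, Cminus, Cplus, Cmult, Copp, RtoC. simpl. f_equal; ring. }
  assert (Hz2 : z = (exp X * cos Y, exp X * sin Y)) by (rewrite HzE; reflexivity).
  exists X, Y. split; [exact Hz2|].
  assert (HX : X < 0).
  { assert (Hm : Cmod z = exp X).
    { rewrite Hz2. unfold Cmod; cbn [fst snd].
      replace ((exp X * cos Y) ^ 2 + (exp X * sin Y) ^ 2) with (exp X ^ 2 * ((sin Y)² + (cos Y)²)) by (unfold Rsqr; ring).
      rewrite sin2_cos2, Rmult_1_r. apply sqrt_pow2. left; apply exp_pos. }
    rewrite Hm in Hz. rewrite <- exp_0 in Hz. apply exp_lt_inv in Hz. exact Hz. }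
  split; [exact HX|].
  assert (Hw1 : (z - Ci)%C = (Pf X Y 1, Qf X Y 1)).
  { rewrite Hz2. unfold Pf, Qf. rewrite !Rmult_1_l. unfold Ci, Cminus, Cplus, Copp. simpl. f_equal; ring. }
  assert (Hw0 : (1 - Ci)%C = (Pf X Y 0, Qf X Y 0)).
  { unfold Pf, Qf. rewrite !Rmult_0_l, exp_0, cos_0, sin_0. unfold Ci, Cminus, Cplus, Copp, RtoC. simpl. f_equal; ring. }
  assert (HL1 : Lf X Y 1 = rho).
  { unfold rho. rewrite Hw1, ln_cmod. reflexivity. apply Nf_pos; lra. }
  assert (HL0 : Lf X Y 0 = c1).
  { unfold c1. rewrite Hw0, ln_cmod. reflexivity. apply Nf_pos; lra. }
  assert (HT1 : Tf X Y 1 = th).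
  { unfold th. rewrite Hw1, Arg_neg. reflexivity. apply Qf_neg; lra. }
  assert (HT0 : Tf X Y 0 = c2).
  { unfold c2. rewrite Hw0, Arg_neg. reflexivity. apply Qf_neg; lra. }
  unfold qf, ReE, ImE. rewrite HL1, HL0, HT1, HT0. unfold X, Y. split; [|split]; field.
Qed.

Theorem proposition3p2 (gamma : R -> C) :
  (exists eps : R, 0 < eps /\
     forall t : R, 0 < t < eps ->
       in_disc (gamma t) /\
       phi (gamma t) = Cmult (Cexp (Cmult (Ci - 1) (RtoC t))) (phi 1)) ->
  filterlim (fun t => Arg (Cminus 1 (gamma t))) (at_right 0) (locally 0).
Proof.
  intros [eps [Heps H]].
  apply filterlim_locally. intros [e He]. simpl.
  set (s0 := Rmin (1/312) (e/156)).
  assert (Hs0 : 0 < s0) by (unfold s0; apply Rmin_pos; lra).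
  assert (Hs01 : s0 <= 1/312) by apply Rmin_l.
  assert (Hs02 : s0 <= e/156) by apply Rmin_r.
  set (d := Rmin eps (Rmin (1/384) (s0^2/24))).
  assert (Hd : 0 < d). { unfold d. apply Rmin_pos; auto. apply Rmin_pos. lra. assert (0 < s0^2) by nra. lra. }
  assert (Hd1 : d <= eps) by apply Rmin_l.
  assert (Hd2 : d <= 1/384) by (eapply Rle_trans; [apply Rmin_r|apply Rmin_l]).
  assert (Hd3 : d <= s0^2/24) by (eapply Rle_trans; [apply Rmin_r|apply Rmin_r]).
  exists (mkposreal d Hd). intros t Ht Htpos.
  assert (Htd : t < d).
  { change (Rabs (t - 0) < d) in Ht. rewrite Rminus_0_r, Rabs_pos_eq in Ht; lra. }
  destruct (H t ltac:(lra)) as [Hdisc Hp].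
  destruct (reduce _ _ Hdisc Hp) as [x [y [Hz [Hx [Hq [Hre Him]]]]]].
  change (Rabs (Arg (Cminus 1 (gamma t)) - 0) < e). rewrite Rminus_0_r, Hz.
  apply arg_bound; auto.
  assert (S1 := step1 x y Hx). rewrite Hq in S1.
  set (m := x^2+y^2) in *. set (a := -x) in *.
  assert (Ha : 0 < a) by (unfold a; lra).
  assert (Hm0 : 0 <= m) by (unfold m; nra).
  assert (Ha2 : a^2 <= m) by (unfold a, m; nra).
  assert (Hm8 : m <= 8 * t * (1 + 2*a)).
  { assert (H1 : m * a / (4 * (1 + 2 * a)) * (4 * (1 + 2*a)) = m * a) by (field; lra).
    assert (H2 : -2 * t * x * (4 * (1 + 2*a)) >= m * a / (4 * (1 + 2 * a)) * (4 * (1 + 2*a))).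
    { apply Rle_ge. apply Rmult_le_compat_r. lra. lra. }
    rewrite H1 in H2. replace x with (-a) in H2 by (unfold a; ring). nra. }
  assert (Hm1 : m < 1).
  { destruct (Rlt_le_dec m 1) as [|Hge]; auto. exfalso.
    assert (a <= m) by nra. nra. }
  assert (Ha1 : a < 1) by nra.
  assert (Hm24 : m <= 24 * t) by nra.
  assert (Hms : m < s0^2) by nra.
  assert (Hm16 : m <= 1/16) by nra.
  set (sg := sqrt m).
  assert (Hsg : sg^2 = m) by (unfold sg; rewrite <- Rsqr_pow2; apply Rsqr_sqrt; auto).
  assert (Hsg0 : 0 <= sg) by apply sqrt_pos.
  assert (Hsgs : sg < s0) by nra.
  destruct (step2 x y Hx Hm16) as [S2a S2b]. fold m sg in S2a, S2b. rewrite Hre in S2a. rewrite Him in S2b.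
  assert (HK : 13 * m * sg <= 312 * t * sg) by nra.
  assert (HK2 : 312 * t * sg <= t) by nra.
  assert (Hx2 : x^2 - y^2 >= 2 * t).
  { assert (H0 := Rle_abs (- (-2 * t + (x ^ 2 - y ^ 2) / 2))). rewrite Rabs_Ropp in H0. lra. }
  assert (Hxy : Rabs (x*y) < 2 * t * e).
  { assert (312 * t * sg < 312 * t * (e/156)) by nra. lra. }
  assert (Hx4 : x^2 * x^2 >= 4 * t^2) by nra.
  assert (Hxy2 : (x*y)^2 < (2*t*e)^2).
  { rewrite <- (pow2_abs (x*y)). assert (H0 := Rabs_pos (x*y)). nra. }
  assert (Hy2 : y^2 < (e*a)^2).
  { replace ((e*a)^2) with (e^2 * x^2) by (unfold a; ring).
    assert (H0 : (x*y)^2 = x^2 * y^2) by ring.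
    assert (0 < x^2) by nra.
    assert (x^2 * y^2 < x^2 * (e^2 * x^2)) by nra. nra. }
  rewrite <- (pow2_abs y) in Hy2. assert (H0 := Rabs_pos y). assert (Hea : 0 < e * a) by nra.
  change (Rabs y < e * a). destruct (Rlt_le_dec (Rabs y) (e*a)) as [Hl|Hl]; auto. exfalso.
  assert (Rabs y * Rabs y >= (e*a)*(e*a)) by (apply Rle_ge; apply Rmult_le_compat; lra). nra.
Qed.
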